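(* Consider the one-dimensional relativistic hydrodynamics system $\partial_t\mathbf{u}+\partial_x\mathbf{f}(\mathbf{u})=0$ with $\mathbf{u}=(D,m_1,E)^\top$ and $\mathbf{f}(\mathbf{u})=(Dv_1,\,m_1v_1+p,\,m_1)^\top$, closed by any one of the equations of state ID-EOS, TM-EOS, IP-EOS or RC-EOS described in the context. Let $\mathcal{U}'_{\mathrm{ad}}=\{(D,m_1,E): D>0,\ E-\sqrt{D^2+m_1^2}>0\}$. Let $\Delta x>0$, $\Delta t>0$, $w_i>0$, and let $\mathbf{u}^n_{i-1},\mathbf{u}^n_i,\mathbf{u}^n_{i+1}\in\mathcal{U}'_{\mathrm{ad}}$. Define \[ \mathbf{u}^{n+1}_i=\mathbf{u}^n_i-\frac{\Delta t}{w_i\Delta x}\Big[\mathbf{f}^{\mathrm{NF}}(\mathbf{u}^n_i,\mathbf{u}^n_{i+1})-\mathbf{f}^{\mathrm{NF}}(\mathbf{u}^n_{i-1},\mathbf{u}^n_i)\Big], \] where $\mathbf{f}^{\mathrm{NF}}$ is the Rusanov flux \[ \mathbf{f}^{\mathrm{NF}}(\mathbf{u}^-,\mathbf{u}^+)=\tfrac12\big[\mathbf{f}(\mathbf{u}^-)+\mathbf{f}(\mathbf{u}^+)\big]-\tfrac12\lambda(\mathbf{u}^-,\mathbf{u}^+)\,[\mathbf{u}^+-\mathbf{u}^-],\qquad \lambda(\mathbf{u}^-,\mathbf{u}^+)=\max\{r(\mathbf{u}^-),r(\mathbf{u}^+)\}, \] with $r(\mathbf{u})=\dfrac{|v_1|+c_s}{1+c_s|v_1|}$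 the spectral radius of the flux Jacobian $\mathbf{f}'(\mathbf{u})$. Set $\Lambda_{i-\frac12}=\lambda(\mathbf{u}^n_{i-1},\mathbf{u}^n_i)$ and $\Lambda_{i+\frac12}=\lambda(\mathbf{u}^n_i,\mathbf{u}^n_{i+1})$. If \[ \Delta t\,\frac{\Lambda_{i-\frac12}+\Lambda_{i+\frac12}}{2w_i\Delta x}<1, \] then $\mathbf{u}^{n+1}_i\in\mathcal{U}'_{\mathrm{ad}}$.
   Context: Units with speed of light $1$. Primitive variables: rest-mass density $\rho$, velocity $v_1$, pressure $p$; Lorentz factor $\Gamma=1/\sqrt{1-v_1^2}$; specific enthalpy $h$ given by an equation of state; conservative variables $D=\rho\Gamma$, $m_1=\rho h\Gamma^2 v_1$, $E=\rho h\Gamma^2-p$. The equations of state and corresponding sound speeds $c_s$ are: ID-EOS: $h=1+\frac{\gamma}{\gamma-1}\frac{p}{\rho}$ with constant $\gamma\in(1,2]$, $c_s^2=\frac{\gamma p}{h\rho}$; TM-EOS: $h=\frac{5p}{2\rho}+\sqrt{\frac{9p^2}{4\rho^2}+1}$, $c_s^2=\frac{5p\sqrt{9p^2+4\rho^2}+9p^2}{12p\sqrt{9p^2+4\rho^2}+36p^2+6\rho^2}$; IP-EOS: $h=\frac{2p}{\rho}+\sqrt{\frac{4p^2}{\rho^2}+1}$, $c_s^2=\frac{2p\sqrt{4p^2+\rho^2}}{4p\sqrt{4p^2+\rho^2}+4p^2+\rho^2}$; RC-EOS: $h=\frac{2(6p^2+4p\rho+\rho^2)}{\rho(3p+2\rho)}$,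 $c_s^2=\frac{p(3p+2\rho)(18p^2+24p\rho+5\rho^2)}{3(6p^2+4p\rho+\rho^2)(9p^2+12p\rho+2\rho^2)}$. For each of these equations of state, every $\mathbf{u}\in\mathcal{U}'_{\mathrm{ad}}$ corresponds to unique primitive variables with $\rho>0$, $p>0$, $|v_1|<1$ (this is how $v_1,p,c_s$ and $\mathbf{f}(\mathbf{u})$ are evaluated from $\mathbf{u}$), and $0<c_s<1$. The numbers $w_i$ are positive quadrature weights (sub-cell widths relative to $\Delta x$) of a first-order finite volume update at the $i$-th point. *)

(* Defs.v *)
From Stdlib Require Import Reals Lra.
Open Scope R_scope.

Inductive EOS : Type := ID (gamma : R) | TM | IP | RC.

Definition eos_ok (e : EOS) : Prop :=
  match e with ID g => 1 < g <= 2 | _ => True end.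

Definition enthalpy (e : EOS) (rho p : R) : R :=
  match e with
  | ID g => 1 + g / (g - 1) * (p / rho)
  | TM => 5 * p / (2 * rho) + sqrt (9 * p ^ 2 / (4 * rho ^ 2) + 1)
  | IP => 2 * p / rho + sqrt (4 * p ^ 2 / rho ^ 2 + 1)
  | RC => 2 * (6 * p ^ 2 + 4 * p * rho + rho ^ 2) / (rho * (3 * p + 2 * rho))
  end.

Definition sound2 (e : EOS) (rho p : R) : R :=
  match e with
  | ID g => g * p / (enthalpy (ID g) rho p * rho)
  | TM => (5 * p * sqrt (9 * p ^ 2 + 4 * rho ^ 2) + 9 * p ^ 2)
          / (12 * p * sqrt (9 * p ^ 2 + 4 * rho ^ 2) + 36 * p ^ 2 + 6 * rho ^ 2)
  | IP => 2 * p * sqrt (4 * p ^ 2 + rho ^ 2)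
          / (4 * p * sqrt (4 * p ^ 2 + rho ^ 2) + 4 * p ^ 2 + rho ^ 2)
  | RC => p * (3 * p + 2 * rho) * (18 * p ^ 2 + 24 * p * rho + 5 * rho ^ 2)
          / (3 * (6 * p ^ 2 + 4 * p * rho + rho ^ 2) * (9 * p ^ 2 + 12 * p * rho + 2 * rho ^ 2))
  end.

Definition sound (e : EOS) (rho p : R) : R := sqrt (sound2 e rho p).

Record prim : Type := mkPrim { prho : R; pvel : R; ppres : R }.

Definition state : Type := (R * R * R)%type.

Definition lorentz (v : R) : R := 1 / sqrt (1 - v ^ 2).

Definition to_cons (e : EOS) (w : prim) : state :=
  let rho := prho w in let v := pvel w in let p := ppres w in
  let G := lorentz v in let h := enthalpy e rho p in
  (rho * G, rho * h * G ^ 2 * v, rho * h * G ^ 2 - p).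

Definition is_prim_of (e : EOS) (w : prim) (u : state) : Prop :=
  0 < prho w /\ 0 < ppres w /\ Rabs (pvel w) < 1 /\ to_cons e w = u.

Definition Uad (u : state) : Prop :=
  let '(D, m, E) := u in 0 < D /\ 0 < E - sqrt (D ^ 2 + m ^ 2).

Definition flux (w : prim) (u : state) : state :=
  let '(D, m, E) := u in (D * pvel w, m * pvel w + ppres w, m).

Definition specrad (e : EOS) (w : prim) : R :=
  let c := sound e (prho w) (ppres w) in
  (Rabs (pvel w) + c) / (1 + c * Rabs (pvel w)).

Definition lam (e : EOS) (wl wr : prim) : R := Rmax (specrad e wl) (specrad e wr).

Definition sadd (a b : state) : state :=
  let '(a1, a2, a3) := a in let '(b1, b2, b3) := b in (a1 + b1, a2 + b2, a3 + b3).
Definition ssub (a b : state) : state :=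
  let '(a1, a2, a3) := a in let '(b1, b2, b3) := b in (a1 - b1, a2 - b2, a3 - b3).
Definition sscale (k : R) (a : state) : state :=
  let '(a1, a2, a3) := a in (k * a1, k * a2, k * a3).

Definition rusanov (e : EOS) (wl : prim) (ul : state) (wr : prim) (ur : state) : state :=
  ssub (sscale (1/2) (sadd (flux wl ul) (flux wr ur)))
       (sscale (1/2 * lam e wl wr) (ssub ur ul)).

Definition fv_update (e : EOS) (dt dx wi : R)
  (wL : prim) (uL : state) (wC : prim) (uC : state) (wR : prim) (uR : state) : state :=
  ssub uC (sscale (dt / (wi * dx))
             (ssub (rusanov e wC uC wR uR) (rusanov e wL uL wC uC))).

(* Main.v *)
Require Import Defs.
From Stdlib Require Import Reals Lra Psatz.
Open Scope R_scope.

Lemma frac_ge n d q x : 0 < d -> x * d <= n * q -> x <= n / d * q.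
Proof. intros Hd H. apply (Rmult_le_reg_r d); auto.
replace (n / d * q * d) with (n * q) by (field; lra). lra. Qed.

Lemma frac_nonneg n d : 0 < d -> 0 <= n -> 0 <= n / d.
Proof. intros. unfold Rdiv. apply Rmult_le_pos; auto. left; apply Rinv_0_lt_compat; auto. Qed.

Lemma sqrt_scale a r : 0 < r -> 0 <= a -> sqrt (a / (r^2)) = sqrt a / r.
Proof. intros Hr Ha. rewrite sqrt_div_alt by nra. rewrite sqrt_pow2 by lra. reflexivity. Qed.

Lemma eos_ID g rho p : 1 < g <= 2 -> 0 < rho -> 0 < p ->
  let rh := rho * enthalpy (ID g) rho p in
  0 <= sound2 (ID g) rho p /\ 0 <= (rh - p)^2 - rho^2 - p^2 /\
  p^2 <= sound2 (ID g) rho p * ((rh - p)^2 - rho^2).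
Proof.
  intros Hg Hr Hp rh.
  set (k := g / (g - 1)).
  assert (Hk1 : g * (k - 1) = k) by (unfold k; field; lra).
  assert (Hk2 : 2 <= k).
  { unfold k. apply (Rmult_le_reg_r (g-1)); [lra|]. replace (g/(g-1)*(g-1)) with g by (field; lra). lra. }
  assert (Hrh : rh = rho + k * p) by (unfold rh, enthalpy, k; field; lra).
  assert (Hs : sound2 (ID g) rho p = g * p / (rho + k * p)).
  { unfold sound2. fold k. replace (enthalpy (ID g) rho p * rho) with rh by (unfold rh; ring).
    rewrite Hrh. reflexivity. }
  rewrite Hs, Hrh. clear Hs Hrh. clearbody rh k. split; [|split].
  - apply frac_nonneg; nra.
  - assert (0 <= (k-1)*p*rho) by (apply Rmult_le_pos; [apply Rmult_le_pos|]; lra).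
    assert (0 <= k*(k-2)*p*p) by (repeat apply Rmult_le_pos; lra).
    replace ((rho + k * p - p) ^ 2 - rho ^ 2 - p ^ 2) with (2*((k-1)*p*rho) + k*(k-2)*p*p) by ring. lra.
  - apply frac_ge; [nra|].
    replace (g * p * ((rho + k * p - p) ^ 2 - rho ^ 2)) with (p*p*(g*(k-1))*(2*rho+(k-1)*p)) by ring.
    rewrite Hk1.
    assert (0 <= p*p*((2*k-1)*rho + k*(k-2)*p)).
    { apply Rmult_le_pos; [nra|].
      assert (0 <= (2*k-1)*rho) by (apply Rmult_le_pos; lra).
      assert (0 <= k*(k-2)*p) by (repeat apply Rmult_le_pos; lra). lra. }
    replace (p ^ 2 * (rho + k * p)) with (p*p*(rho+k*p)) by ring.
    replace (p * p * k * (2 * rho + (k - 1) * p) - p * p * (rho + k * p)) with (p*p*((2*k-1)*rho + k*(k-2)*p)) by ring.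
    lra.
Qed.

Lemma eos_TM rho p : 0 < rho -> 0 < p ->
  let rh := rho * enthalpy TM rho p in
  0 <= sound2 TM rho p /\ 0 <= (rh - p)^2 - rho^2 - p^2 /\
  p^2 <= sound2 TM rho p * ((rh - p)^2 - rho^2).
Proof.
  intros Hr Hp rh.
  set (S := sqrt (9 * p ^ 2 + 4 * rho ^ 2)).
  assert (HS0 : 0 <= S) by apply sqrt_pos.
  assert (HS2 : S * S = 9 * p ^ 2 + 4 * rho ^ 2) by (apply sqrt_sqrt; nra).
  assert (Hrh : rh = (5 * p + S) / 2).
  { unfold rh, enthalpy.
    replace (9 * p ^ 2 / (4 * rho ^ 2) + 1) with ((9 * p ^ 2 + 4 * rho ^ 2) / ((2*rho)^2)) by (field; lra).
    rewrite sqrt_scale by nra. fold S. field. lra. }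
  unfold sound2. fold S. rewrite Hrh. clear Hrh. clearbody S rh. split; [|split].
  - apply frac_nonneg; nra.
  - nra.
  - apply frac_ge; [nra|].
    assert (HX: ((5*p+S)/2 - p)^2 - rho^2 = (18*p^2 + 6*p*S)/4).
    { replace (((5*p+S)/2-p)^2) with ((9*p^2+6*p*S+S*S)/4) by field. rewrite HS2. field. }
    rewrite HX.
    match goal with |- ?L <= ?R => assert (E : R - L = p^2*(48*p*S + 15*(S*S) + 9*p^2 - 12*rho^2)/2) by field end.
    rewrite HS2 in E.
    assert (0 <= p^2*(48*p*S + 15*(9 * p ^ 2 + 4 * rho ^ 2) + 9*p^2 - 12*rho^2)/2).
    { apply frac_nonneg; [lra|]. apply Rmult_le_pos; [nra|].
      assert (0 <= p*S) by nra. nra. }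
    lra.
Qed.

Lemma eos_IP rho p : 0 < rho -> 0 < p ->
  let rh := rho * enthalpy IP rho p in
  0 <= sound2 IP rho p /\ 0 <= (rh - p)^2 - rho^2 - p^2 /\
  p^2 <= sound2 IP rho p * ((rh - p)^2 - rho^2).
Proof.
  intros Hr Hp rh.
  set (S := sqrt (4 * p ^ 2 + rho ^ 2)).
  assert (HS0 : 0 <= S) by apply sqrt_pos.
  assert (HS2 : S * S = 4 * p ^ 2 + rho ^ 2) by (apply sqrt_sqrt; nra).
  assert (Hrh : rh = 2 * p + S).
  { unfold rh, enthalpy.
    replace (4 * p ^ 2 / rho ^ 2 + 1) with ((4 * p ^ 2 + rho ^ 2) / (rho^2)) by (field; lra).
    rewrite sqrt_scale by nra. fold S. field. lra. }
  unfold sound2. fold S. rewrite Hrh. clear Hrh. clearbody S rh. split; [|split].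
  - apply frac_nonneg; nra.
  - replace ((2 * p + S - p) ^ 2 - rho ^ 2 - p ^ 2) with (2*(p*S) + (S*S) - rho^2) by ring.
    rewrite HS2. assert (0 <= p*S) by nra. nra.
  - apply frac_ge; [nra|].
    replace ((2 * p + S - p) ^ 2 - rho ^ 2) with (p^2 + 2*(p*S) + (S*S) - rho^2) by ring.
    rewrite HS2.
    match goal with |- ?L <= ?R => assert (E : R - L = 6*p^2*(p*S) + 12*p^4 + 3*p^2*rho^2) end.
    { replace (S*S) with (4 * p ^ 2 + rho ^ 2) by auto. ring_simplify. nra. }
    assert (0 <= p*S) by nra. assert (0 <= p^2*(p*S)) by nra. nra.
Qed.

Lemma eos_RC rho p : 0 < rho -> 0 < p ->
  let rh := rho * enthalpy RC rho p in
  0 <= sound2 RC rho p /\ 0 <= (rh - p)^2 - rho^2 - p^2 /\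
  p^2 <= sound2 RC rho p * ((rh - p)^2 - rho^2).
Proof.
  intros Hr Hp. cbv zeta.
  assert (HT : 0 < 3 * p + 2 * rho) by lra.
  assert (HB : 0 < 6 * p ^ 2 + 4 * p * rho + rho ^ 2) by nra.
  assert (HC : 0 < 9 * p ^ 2 + 12 * p * rho + 2 * rho ^ 2) by nra.
  assert (HA : 0 < 18 * p ^ 2 + 24 * p * rho + 5 * rho ^ 2) by nra.
  assert (Hrh : rho * enthalpy RC rho p - p = (9*p^2 + 6*p*rho + 2*rho^2) / (3 * p + 2 * rho))
    by (unfold enthalpy; field; lra).
  rewrite Hrh. unfold sound2. clear Hrh.
  assert (P4 : 0 <= p^4) by nra.
  assert (P3 : 0 <= p^3*rho) by (apply Rmult_le_pos; nra).
  assert (P2 : 0 <= p^2*rho^2) by nra.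
  assert (P1 : 0 <= p*rho^3) by (apply Rmult_le_pos; nra).
  split; [|split].
  - apply frac_nonneg.
    + apply Rmult_lt_0_compat; [|lra]. apply Rmult_lt_0_compat; lra.
    + apply Rmult_le_pos; [|lra]. apply Rmult_le_pos; lra.
  - replace (((9 * p ^ 2 + 6 * p * rho + 2 * rho ^ 2) / (3 * p + 2 * rho)) ^ 2 - rho ^ 2 - p ^ 2)
      with ((72*p^4 + 96*p^3*rho + 59*p^2*rho^2 + 12*p*rho^3) / (3 * p + 2 * rho)^2) by (field; lra).
    apply frac_nonneg; nra.
  - match goal with |- _ <= ?R => assert (E : R - p^2 = p^2 * (324*p^5+864*p^4*rho+954*p^3*rho^2+558*p^2*rho^3+155*p*rho^4+16*rho^5)
       / ((6 * p ^ 2 + 4 * p * rho + rho ^ 2) * (9 * p ^ 2 + 12 * p * rho + 2 * rho ^ 2) * (3 * p + 2 * rho))) end.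
    { field. repeat split; lra. }
    assert (0 <= p^2 * (324*p^5+864*p^4*rho+954*p^3*rho^2+558*p^2*rho^3+155*p*rho^4+16*rho^5)
       / ((6 * p ^ 2 + 4 * p * rho + rho ^ 2) * (9 * p ^ 2 + 12 * p * rho + 2 * rho ^ 2) * (3 * p + 2 * rho))).
    { apply frac_nonneg.
      + apply Rmult_lt_0_compat; [|lra]. apply Rmult_lt_0_compat; lra.
      + apply Rmult_le_pos; [nra|].
        assert (0 <= p^5) by (apply pow_le; lra).
        assert (0 <= p^4*rho) by (apply Rmult_le_pos; nra).
        assert (0 <= p^3*rho^2) by (apply Rmult_le_pos; nra).
        assert (0 <= p^2*rho^3) by (apply Rmult_le_pos; nra).
        assert (0 <= p*rho^4) by (apply Rmult_le_pos; [lra| apply pow_le; lra]).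
        assert (0 <= rho^5) by (apply pow_le; lra).
        lra. }
    lra.
Qed.

Lemma core rho v p h G c t s av :
  0 < rho -> 0 < p -> 0 <= av < 1 -> v^2 = av^2 -> 0 < G -> G^2*(1-v^2) = 1 ->
  s*s = 1 -> 0 <= c ->
  0 <= (rho*h-p)^2 - rho^2 - p^2 ->
  p^2 <= c^2 * ((rho*h-p)^2 - rho^2) ->
  av + c <= t * (1 + c*av) ->
  0 < rho*h*G^2 - p ->
  (rho*G)^2 + (rho*h*G^2*v)^2 < (rho*h*G^2 - p)^2 ->
  0 <= t*(rho*G) + s*((rho*G)*v) /\
  0 <= t*(rho*h*G^2 - p) + s*(rho*h*G^2*v) /\
  (t*(rho*G) + s*((rho*G)*v))^2 + (t*(rho*h*G^2*v) + s*((rho*h*G^2*v)*v + p))^2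
    <= (t*(rho*h*G^2 - p) + s*(rho*h*G^2*v))^2.
Proof.
  intros Hr Hp Hav Hv HG HG2 Hs Hc HQ HP Ht HE HEm.
  set (Q := (rho*h-p)^2 - rho^2 - p^2) in *. assert (EQ : Q = (rho*h-p)^2 - rho^2 - p^2) by reflexivity. clearbody Q.
  assert (HQ2 : (rho*h-p)^2 - rho^2 = Q + p^2) by (rewrite ?EQ; ring).
  rewrite HQ2 in HP.
  set (H := rho*h*G^2) in *. assert (EH : H = rho*h*G^2) by reflexivity. clearbody H.
  set (a := t + s*v). assert (Ea : a = t + s*v) by reflexivity. clearbody a.
  assert (Hsv : (s*v)^2 = av^2) by (rewrite <- Hv; replace ((s*v)^2) with ((s*s)*v^2) by ring; rewrite Hs; ring).
  assert (Hsv1 : - av <= s*v <= av) by (split; nra).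
  assert (HA : t - av >= c * (1 - t*av)) by nra.
  assert (Htav : av <= t).
  { destruct (Rle_or_lt 1 t). lra.
    assert (0 < 1 - t*av) by nra. assert (0 <= c*(1-t*av)) by nra. lra. }
  assert (Ha : t - av <= a) by (rewrite ?Ea; lra).
  assert (Ha0 : 0 <= a) by lra.
  assert (Hid : (t*(H - p) + s*(H*v))^2 - (t*(H*v) + s*((H*v)*v + p))^2 - (t*(rho*G) + s*((rho*G)*v))^2
     = a^2*G^2*Q + p^2*(t^2 - s*s) + rho^2*h^2*G^2*a^2*(G^2*(1-v^2) - 1)).
  { rewrite Ea, EH, EQ. ring. }
  rewrite HG2, Hs in Hid.
  assert (HW : 0 <= a^2*G^2*Q + p^2*(t^2 - 1)).
  { destruct (Rle_or_lt 1 t).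
    - assert (0 <= a^2*G^2*Q) by (repeat apply Rmult_le_pos; try apply pow2_ge_0; lra).
      assert (0 <= p^2*(t^2-1)) by (apply Rmult_le_pos; nra). lra.
    - set (A := t - av). assert (EA : A = t - av) by reflexivity. clearbody A. set (B := 1 - t*av). assert (EB : B = 1 - t*av) by reflexivity. clearbody B.
      assert (HB : 0 < B) by (rewrite ?EB; nra).
      assert (HAB : c*B <= A) by (rewrite ?EA, ?EB; lra).
      assert (HcB : 0 <= c*B) by nra.
      assert (HA2 : (c*B)^2 <= A^2) by nra.
      assert (H1 : A^2 * (Q+p^2) >= p^2 * B^2).
      { assert (c^2*B^2*(Q+p^2) <= A^2*(Q+p^2)).
        { replace (c^2*B^2) with ((c*B)^2) by ring. apply Rmult_le_compat_r; [nra|lra]. }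
        assert (p^2*B^2 <= c^2*(Q+p^2)*B^2) by (apply Rmult_le_compat_r; nra).
        nra. }
      assert (H2 : A^2*Q <= a^2*Q) by (apply Rmult_le_compat_r; [lra|]; rewrite EA in *; nra).
      assert (Hid2 : (1-t^2)*(1-v^2) = B^2 - A^2) by (rewrite ?EA, ?EB; rewrite Hv; ring).
      assert (H3 : 0 <= a^2*Q - p^2*(1-t^2)*(1-v^2)) by (rewrite Rmult_assoc, Hid2; nra).
      assert (H4 : 0 <= G^2 * (a^2*Q - p^2*(1-t^2)*(1-v^2))) by (apply Rmult_le_pos; nra).
      replace (a^2*G^2*Q + p^2*(t^2 - 1)) with (G^2 * (a^2*Q - p^2*(1-t^2)*(1-v^2)) + p^2*(1-t^2)*(G^2*(1-v^2) - 1)) by ring.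
      rewrite HG2. lra. }
  assert (HX2 : (t*(rho*G) + s*((rho*G)*v))^2 + (t*(H*v) + s*((H*v)*v + p))^2
    <= (t*(H - p) + s*(H*v))^2) by lra.
  split; [|split].
  - replace (t*(rho*G) + s*((rho*G)*v)) with ((rho*G)*a) by (rewrite ?Ea; ring).
    apply Rmult_le_pos; nra.
  - set (X := t*(H - p) + s*(H*v)) in *. assert (EX : X = t*(H - p) + s*(H*v)) by reflexivity. clearbody X.
    set (Y := t*(H*v) + s*((H*v)*v + p)) in *. assert (EY : Y = t*(H*v) + s*((H*v)*v + p)) by reflexivity. clearbody Y.
    destruct (Rle_or_lt 1 t).
    + assert (Hm2 : (s*(H*v))^2 < (H-p)^2).
      { replace ((s*(H*v))^2) with ((s*s)*(H*v)^2) by ring. rewrite Hs. nra. }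
      assert (- (H-p) < s*(H*v)) by nra.
      rewrite EX. nra.
    + assert (HXY : X + s*Y = H*a*(1+s*v) + p*(1-t)*1).
      { rewrite EX, EY, Ea. replace (p*(1-t)*1) with (p*(1-t)*(s*s) + p*(1-t)*(1 - s*s)) by ring.
        rewrite Hs. ring_simplify. nra. }
      assert (0 <= H*a*(1+s*v)) by (apply Rmult_le_pos; [apply Rmult_le_pos|]; lra).
      assert (HXY2 : Y^2 <= X^2) by (assert (0 <= (t*(rho*G) + s*((rho*G)*v))^2) by apply pow2_ge_0; lra).
      destruct (Rle_or_lt 0 X) as [|HX]; [auto|].
      exfalso.
      assert (0 < s*Y) by nra.
      assert ((s*Y)^2 = Y^2) by (replace ((s*Y)^2) with ((s*s)*Y^2) by ring; rewrite Hs; ring).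
      assert (HXs : -X < s*Y) by (assert (0 < p*(1-t)) by nra; lra).
      assert (0 < (s*Y - (-X))*(s*Y + (-X))) by (apply Rmult_lt_0_compat; lra).
      nra.
  - exact HX2.
Qed.

Lemma eos_props e rho p : eos_ok e -> 0 < rho -> 0 < p ->
  0 <= sound2 e rho p /\ 0 <= (rho * enthalpy e rho p - p)^2 - rho^2 - p^2 /\
  p^2 <= sound2 e rho p * ((rho * enthalpy e rho p - p)^2 - rho^2).
Proof.
  intros He Hr Hp. destruct e.
  - exact (eos_ID gamma rho p He Hr Hp).
  - exact (eos_TM rho p Hr Hp).
  - exact (eos_IP rho p Hr Hp).
  - exact (eos_RC rho p Hr Hp).
Qed.

Definition closedc (u : state) : Prop :=
  let '(D, m, E) := u in 0 <= D /\ 0 <= E /\ D^2 + m^2 <= E^2.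
Definition openc (u : state) : Prop :=
  let '(D, m, E) := u in 0 < D /\ 0 < E /\ D^2 + m^2 < E^2.

Lemma uad_open u : Uad u -> openc u.
Proof.
  destruct u as [[D m] E]. cbv beta iota delta [Uad openc closedc sadd sscale flux to_cons prho pvel ppres specrad]. intros [HD HE].
  assert (H0 := sqrt_pos (D^2 + m^2)).
  assert (H1 : sqrt (D^2+m^2) * sqrt (D^2+m^2) = D^2+m^2) by (apply sqrt_sqrt; nra).
  assert (0 < (E - sqrt (D^2+m^2)) * (E + sqrt (D^2+m^2))) by (apply Rmult_lt_0_compat; lra).
  split; [lra|split; nra].
Qed.

Lemma open_uad u : openc u -> Uad u.
Proof.
  destruct u as [[D m] E]. cbv beta iota delta [Uad openc closedc sadd sscale flux to_cons prho pvel ppres specrad]. intros (HD & HE & Hlt).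
  split; [lra|].
  assert (sqrt (D^2+m^2) < sqrt (E^2)) by (apply sqrt_lt_1_alt; split; nra).
  rewrite sqrt_pow2 in H by lra. lra.
Qed.

Lemma cone e w u t s : eos_ok e -> is_prim_of e w u -> Uad u ->
  specrad e w <= t -> s * s = 1 ->
  closedc (sadd (sscale t u) (sscale s (flux w u))).
Proof.
  intros He [Hr [Hp [Hv Heq]]] HU Ht Hs.
  apply uad_open in HU.
  destruct w as [rho v p]. cbv beta iota delta [Uad openc closedc sadd sscale flux to_cons prho pvel ppres specrad] in *.
  destruct u as [[D m] E]. unfold to_cons in Heq. cbv beta iota delta [prho pvel ppres] in Heq.
  injection Heq as HD Hm HE. subst D m E.
  replace (lorentz v * (lorentz v * 1)) with (lorentz v ^ 2) in * by ring.
  unfold specrad in Ht. cbv beta iota delta [prho pvel ppres] in Ht.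
  destruct (eos_props e rho p He Hr Hp) as (Hs0 & HQ & HP).
  set (c := sound e rho p) in *.
  assert (Ec : c = sqrt (sound2 e rho p)) by reflexivity. clearbody c.
  assert (Hc0 : 0 <= c) by (rewrite Ec; apply sqrt_pos).
  assert (Hc2 : c^2 = sound2 e rho p) by (rewrite Ec; replace (sqrt (sound2 e rho p) ^ 2) with (sqrt (sound2 e rho p) * sqrt (sound2 e rho p)) by ring; apply sqrt_sqrt; exact Hs0).
  rewrite <- Hc2 in HP.
  set (av := Rabs v) in *. assert (Eav : av = Rabs v) by reflexivity. clearbody av.
  assert (Hav0 : 0 <= av) by (rewrite Eav; apply Rabs_pos).
  assert (Hv2 : v^2 = av^2) by (rewrite Eav, pow2_abs; reflexivity).
  set (h := enthalpy e rho p) in *. clearbody h.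
  set (G := lorentz v) in *.
  assert (EG : G = 1 / sqrt (1 - v^2)) by reflexivity. clearbody G.
  assert (H1v : 0 < 1 - v^2) by nra.
  assert (Hsq := sqrt_lt_R0 _ H1v).
  assert (Hsq2 : sqrt (1 - v^2) * sqrt (1 - v^2) = 1 - v^2) by (apply sqrt_sqrt; lra).
  assert (HG : 0 < G) by (rewrite EG; apply Rdiv_lt_0_compat; lra).
  assert (HG2 : G^2 * (1 - v^2) = 1).
  { assert (X : G^2 * (sqrt (1 - v^2) * sqrt (1 - v^2)) = 1) by (rewrite EG; field; lra). rewrite Hsq2 in X. exact X. }
  assert (Ht' : av + c <= t * (1 + c * av)).
  { assert (0 < 1 + c*av) by nra.
    apply (Rmult_le_compat_r (1 + c*av)) in Ht; [|lra].
    replace ((av + c) / (1 + c * av) * (1 + c * av)) with (av + c) in Ht by (field; lra). exact Ht. }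
  destruct HU as (HU1 & HU2 & HU3).
  unfold sadd, sscale, flux, closedc.
  apply (core rho v p h G c t s av); auto; lra.
Qed.

Lemma combine (a b c : state) (al be ga : R) :
  0 < al -> 0 <= be -> 0 <= ga -> openc a -> closedc b -> closedc c ->
  openc (sadd (sscale al a) (sadd (sscale be b) (sscale ga c))).
Proof.
  destruct a as [[D1 m1] E1], b as [[D2 m2] E2], c as [[D3 m3] E3].
  cbv beta iota delta [Uad openc closedc sadd sscale flux to_cons prho pvel ppres specrad]. intros Hal Hbe Hga (H1 & H2 & H3) (H4 & H5 & H6) (H7 & H8 & H9).
  assert (add : forall x1 y1 z1 x2 y2 z2, 0 < x1 -> 0 < z1 -> x1^2 + y1^2 < z1^2 ->
     0 <= x2 -> 0 <= z2 -> x2^2 + y2^2 <= z2^2 ->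
     0 < x1 + x2 /\ 0 < z1 + z2 /\ (x1+x2)^2 + (y1+y2)^2 < (z1+z2)^2).
  { intros x1 y1 z1 x2 y2 z2 A1 A2 A3 A4 A5 A6.
    assert (CS : (x1*x2 + y1*y2)^2 <= (x1^2+y1^2)*(x2^2+y2^2)).
    { assert (0 <= (x1*y2 - x2*y1)^2) by apply pow2_ge_0. nra. }
    assert (P : (x1^2+y1^2)*(x2^2+y2^2) <= z1^2*z2^2).
    { apply Rmult_le_compat; nra. }
    assert (K : x1*x2 + y1*y2 <= z1*z2).
    { destruct (Rle_or_lt (x1*x2 + y1*y2) 0). nra.
      assert (0 <= z1*z2) by nra. nra. }
    split; [lra|split; [lra|]]. nra. }
  assert (addc : forall x1 y1 z1 x2 y2 z2,
     0 <= x1 -> 0 <= z1 -> x1^2 + y1^2 <= z1^2 ->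
     0 <= x2 -> 0 <= z2 -> x2^2 + y2^2 <= z2^2 ->
     0 <= x1 + x2 /\ 0 <= z1 + z2 /\ (x1+x2)^2 + (y1+y2)^2 <= (z1+z2)^2).
  { intros x1 y1 z1 x2 y2 z2 A1 A2 A3 A4 A5 A6.
    assert (CS : (x1*x2 + y1*y2)^2 <= (x1^2+y1^2)*(x2^2+y2^2)).
    { assert (0 <= (x1*y2 - x2*y1)^2) by apply pow2_ge_0. nra. }
    assert (P : (x1^2+y1^2)*(x2^2+y2^2) <= z1^2*z2^2).
    { apply Rmult_le_compat; nra. }
    assert (K : x1*x2 + y1*y2 <= z1*z2).
    { destruct (Rle_or_lt (x1*x2 + y1*y2) 0). nra.
      assert (0 <= z1*z2) by nra. nra. }
    split; [lra|split; [lra|]]. nra. }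
  assert (S1 : 0 < al*D1 /\ 0 < al*E1 /\ (al*D1)^2 + (al*m1)^2 < (al*E1)^2).
  { split; [nra|split; [nra|]].
    replace ((al*D1)^2 + (al*m1)^2) with (al^2*(D1^2+m1^2)) by ring.
    replace ((al*E1)^2) with (al^2*E1^2) by ring. apply Rmult_lt_compat_l; nra. }
  assert (S2 : 0 <= be*D2 /\ 0 <= be*E2 /\ (be*D2)^2 + (be*m2)^2 <= (be*E2)^2).
  { split; [nra|split; [nra|]].
    replace ((be*D2)^2 + (be*m2)^2) with (be^2*(D2^2+m2^2)) by ring.
    replace ((be*E2)^2) with (be^2*E2^2) by ring. apply Rmult_le_compat_l; nra. }
  assert (S3 : 0 <= ga*D3 /\ 0 <= ga*E3 /\ (ga*D3)^2 + (ga*m3)^2 <= (ga*E3)^2).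
  { split; [nra|split; [nra|]].
    replace ((ga*D3)^2 + (ga*m3)^2) with (ga^2*(D3^2+m3^2)) by ring.
    replace ((ga*E3)^2) with (ga^2*E3^2) by ring. apply Rmult_le_compat_l; nra. }
  destruct S2 as (S21 & S22 & S23), S3 as (S31 & S32 & S33), S1 as (S11 & S12 & S13).
  destruct (addc _ _ _ _ _ _ S21 S22 S23 S31 S32 S33) as (T1 & T2 & T3).
  exact (add _ _ _ _ _ _ S11 S12 S13 T1 T2 T3).
Qed.

Theorem theorem1 (e : EOS) (dx dt wi : R)
  (uL uC uR : state) (wL wC wR : prim) :
  eos_ok e -> 0 < dx -> 0 < dt -> 0 < wi ->
  Uad uL -> Uad uC -> Uad uR ->
  is_prim_of e wL uL -> is_prim_of e wC uC -> is_prim_of e wR uR ->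
  dt * (lam e wL wC + lam e wC wR) / (2 * wi * dx) < 1 ->
  Uad (fv_update e dt dx wi wL uL wC uC wR uR).
Proof.
  intros He Hdx Hdt Hwi HL HC HR PL PC PR Hcfl.
  set (LL := lam e wL wC) in *. set (LR := lam e wC wR) in *.
  assert (HLL : specrad e wL <= LL) by apply Rmax_l.
  assert (HLR : specrad e wR <= LR) by apply Rmax_r.
  assert (CL := cone e wL uL LL 1 He PL HL HLL ltac:(ring)).
  assert (CR := cone e wR uR LR (-1) He PR HR HLR ltac:(ring)).
  assert (OC := uad_open uC HC).
  set (k := dt / (wi * dx)).
  assert (Hk : 0 < k) by (unfold k; apply Rdiv_lt_0_compat; nra).
  assert (Hal : 0 < 1 - k*(LL+LR)/2).
  { replace (k*(LL+LR)/2) with (dt * (LL + LR) / (2 * wi * dx)) by (unfold k; field; lra). lra. }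
  assert (Hcomb := combine uC _ _ (1 - k*(LL+LR)/2) (k/2) (k/2) Hal ltac:(lra) ltac:(lra) OC CR CL).
  apply open_uad.
  replace (fv_update e dt dx wi wL uL wC uC wR uR) with
    (sadd (sscale (1 - k*(LL+LR)/2) uC)
       (sadd (sscale (k/2) (sadd (sscale LR uR) (sscale (-1) (flux wR uR))))
             (sscale (k/2) (sadd (sscale LL uL) (sscale 1 (flux wL uL)))))).
  - exact Hcomb.
  - unfold fv_update, rusanov. fold LL LR k.
    destruct uL as [[a1 a2] a3], uC as [[b1 b2] b3], uR as [[c1 c2] c3].
    unfold flux, sadd, ssub, sscale.
    f_equal; [f_equal|]; field; lra.
Qed.
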